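(* Let $\beta,\theta,\gamma>0$ and let $\mathcal{L}$ and $(M_t)$ be as in the context. There exists a function $\psi:\mathbb{N}_+\to(0,\infty)$ with $0<\inf_{\mathbb{N}_+}\psi<\sup_{\mathbb{N}_+}\psi\le1$ such that for every $V\in\mathcal{S}\cup\{[x^p]:p\ge1\}$: (i) there exist real constants $a<b$, $\xi$ and $\zeta>0$ such that $$\mathcal{L}V\le aV+\zeta\psi,\qquad b\psi\le\mathcal{L}\psi\le\xi\psi\quad\text{pointwise on }\mathbb{N}_+;$$ (ii) for $R$ large enough, the set $K=\{x\in\mathbb{N}_+:\psi(x)\ge V(x)/R\}$ is non-empty and finite, and for all $x,y\in K$ and $t_0>0$, $M_{t_0}(x,y)>0$.
   Context: $\mathcal{L}$ acts on functions $f:\mathbb{N}_+\to\mathbb{R}$ by $$\mathcal{L}f(n)=\beta n(f(n+1)-f(n))-\theta nf(n)+\sum_{j=1}^{n-1}\frac{\gamma n}{j(j+1)}\big(f(j)+f(n-j)-f(n)\big).$$ It is the generator of the first moment semigroup $M_tf(n)=\mathbb{E}_{\delta_n}[\sum_{\mathcal{C}}f(|\mathcal{C}|)]$ (sum over active clusters at time $t$) of the GFI process with parameters $\beta,\theta,\gamma$, started from one active cluster which is a uniform random recursive tree of size $n$; in this process each active cluster of size $n$ independently becomes inactive at rate $\theta n$, grows to size $n+1$ at rate $\beta n$, and splits into clusters of sizes $n-j$ and $j$ at rate $\gamma n/(j(j+1))$. $M_t(n,m)=M_t\mathbf{1}_m(n)$ is the mean number of active clusters of size $m$ at time $t$. $[x^p](n)=n^p$.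 $\mathcal{S}$ is the set of functions $f:\mathbb{N}_+\to[1,\infty)$ that are increasing with $\lim_{n\to\infty}f(n)=\infty$, satisfy $f(n+1)/(n+1)\le f(n)/n$ for all $n$, and $\sum_{j\ge1}f(j)/(j(j+1))<\infty$. *)

(* Defs.v *)
From HB Require Import structures.
From mathcomp Require Import all_boot all_order all_algebra.
From mathcomp Require Import all_classical all_reals all_analysis.
Set Implicit Arguments. Unset Strict Implicit. Unset Printing Implicit Defensive.
Import Order.TTheory GRing.Theory Num.Theory.
Import numFieldNormedType.Exports.
Local Open Scope classical_set_scope.
Local Open Scope ring_scope.

(* Functions on N_+ are represented as functions nat -> R; only the values at
   n >= 1 ever matter (L f n for n >= 1 only uses f at indices >= 1). *)

Definition split_rate {R : realType} (gamma : R) (n j : nat) : R :=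
  gamma * n%:R / (j%:R * (j.+1)%:R).

Definition gen_L {R : realType} (beta theta gamma : R) (f : nat -> R) (n : nat) : R :=
  beta * n%:R * (f n.+1 - f n) - theta * n%:R * f n
  + \sum_(1 <= j < n) split_rate gamma n j * (f j + f (n - j)%N - f n).

Definition total_rate {R : realType} (beta theta gamma : R) (n : nat) : R :=
  beta * n%:R + theta * n%:R + \sum_(1 <= j < n) split_rate gamma n j.

(* Picard iterates of the mild (integral) backward Kolmogorov equation of the
   first moment semigroup:
   M_t(n,m) = e^{-r(n)t} 1_{n=m}
     + int_0^t e^{-r(n)s} [ beta n M_{t-s}(n+1,m)
                 + sum_{j=1}^{n-1} gamma n/(j(j+1)) (M_{t-s}(j,m) + M_{t-s}(n-j,m)) ] ds *)
Fixpoint moment_iter {R : realType} (beta theta gamma : R) (k : nat)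
  : R -> nat -> nat -> \bar R :=
  match k with
  | 0 => fun _ _ _ => 0%E
  | k'.+1 => fun t n m =>
      ((expR (- total_rate beta theta gamma n * t) * (n == m)%:R)%:E
       + \int[@lebesgue_measure R]_(s in `[0%R, t]%classic)
           ((expR (- total_rate beta theta gamma n * s))%:E *
            ((beta * n%:R)%:E * moment_iter beta theta gamma k' (t - s) n.+1 m
             + \sum_(1 <= j < n) (split_rate gamma n j)%:E *
                 (moment_iter beta theta gamma k' (t - s) j m
                  + moment_iter beta theta gamma k' (t - s) (n - j)%N m))))%E
  end.

(* M_t(n,m): mean number of active clusters of size m at time t, started from one
   active cluster of size n; defined as the minimal nonnegative solution of the
   mild backward equation (monotone limit of the Picard iterates). *)
Definition moment_M {R : realType} (beta theta gamma : R) (t : R) (n m : nat) : \bar R :=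
  ereal_sup (range (fun k => moment_iter beta theta gamma k t n m)).

Definition in_S {R : realType} (f : nat -> R) : Prop :=
  (forall n, (0 < n)%N -> 1 <= f n) /\
  (forall n, (0 < n)%N -> f n <= f n.+1) /\
  (f @ \oo --> +oo) /\
  (forall n, (0 < n)%N -> f n.+1 / (n.+1)%:R <= f n / n%:R) /\
  (\sum_(1 <= j <oo) (f j / (j%:R * (j.+1)%:R))%:E < +oo)%E.

Definition powfun {R : realType} (p : R) (n : nat) : R := (n%:R) `^ p.

(* Main.v *)
Require Import Defs.
From HB Require Import structures.
From mathcomp Require Import all_boot all_order all_algebra.
From mathcomp Require Import all_classical all_reals all_analysis.
From mathcomp Require Import ring lra zify.
Import Order.TTheory GRing.Theory Num.Theory.
Import numFieldNormedType.Exports.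
Local Open Scope classical_set_scope.
Local Open Scope ring_scope.

Section M.
Context {R : realType} (beta theta gamma : R).
Hypotheses (hb : 0 < beta) (ht : 0 < theta) (hg : 0 < gamma).

Lemma split_rate_ge0 n j : 0 <= split_rate gamma n j.
Proof. by rewrite /split_rate; apply: divr_ge0; apply: mulr_ge0 => //; exact: ltW. Qed.

Lemma split_rate_gt0 n j : (0 < n)%N -> (0 < j)%N -> 0 < split_rate gamma n j.
Proof. by move=> n0 j0; rewrite /split_rate; apply: divr_gt0; apply: mulr_gt0; rewrite ?ltr0n. Qed.

Lemma total_rate_ge0 n : 0 <= total_rate beta theta gamma n.
Proof.
rewrite /total_rate; apply: addr_ge0; first by apply: addr_ge0; apply: mulr_ge0 => //; exact: ltW.
by rewrite big_seq_cond; apply: sumr_ge0 => j _; exact: split_rate_ge0.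
Qed.

Local Open Scope ereal_scope.
Lemma int_mono (D : set R) (f g : R -> \bar R) :
  (forall x, D x -> 0 <= g x) -> (forall x, D x -> g x <= f x) ->
  \int[@lebesgue_measure R]_(x in D) g x <= \int[@lebesgue_measure R]_(x in D) f x.
Proof.
move=> g0 gf.
rewrite !ge0_integralE //; last by move=> x Dx; apply: le_trans (g0 x Dx) (gf x Dx).
apply: ereal_sup_le => _ [h hh <-]; exists h => //= x.
apply: le_trans (hh x) _; rewrite /patch; case: ifP => // /[!inE] Dx; exact: gf.
Qed.

Notation it := (moment_iter beta theta gamma).

Definition brk k tau n m :=
  (beta * n%:R)%:E * it k tau n.+1 m
  + \sum_(1 <= j < n) (split_rate gamma n j)%:E * (it k tau j m + it k tau (n - j)%N m).

Lemma itE k t n m : it k.+1 t n m =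
  (expR (- total_rate beta theta gamma n * t) * (n == m)%:R)%:E
  + \int[@lebesgue_measure R]_(s in `[0%R, t]%classic)
      ((expR (- total_rate beta theta gamma n * s))%:E * brk k (t - s) n m).
Proof. by []. Qed.

Lemma it_ge0 k t n m : 0 <= it k t n m.
Proof.
elim: k t n m => [//|k IH] t n m.
rewrite itE; apply: adde_ge0; first by rewrite lee_fin; apply: mulr_ge0; rewrite ?expR_ge0.
apply: integral_ge0 => s _; apply: mule_ge0; first by rewrite lee_fin expR_ge0.
apply: adde_ge0; first by apply: mule_ge0 => //; rewrite lee_fin; apply: mulr_ge0 => //; exact: ltW.
apply: sume_ge0 => j _; apply: mule_ge0; first by rewrite lee_fin split_rate_ge0.
exact: adde_ge0.
Qed.

Lemma brk_grow k tau n m : (beta * n%:R)%:E * it k tau n.+1 m <= brk k tau n m.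
Proof.
apply: leeDl; apply: sume_ge0 => j _; apply: mule_ge0; first by rewrite lee_fin split_rate_ge0.
exact: adde_ge0 (it_ge0 _ _ _ _) (it_ge0 _ _ _ _).
Qed.

Lemma brk_split k tau n m y : (1 <= y < n)%N ->
  (split_rate gamma n y)%:E * it k tau y m <= brk k tau n m.
Proof.
move=> /andP[y1 yn].
apply: le_trans (leeDr _ _) ; last first.
  by apply: mule_ge0; rewrite ?it_ge0 // lee_fin; apply: mulr_ge0 => //; exact: ltW.
rewrite (@big_cat_nat _ _ _ y 1 n) //; last exact: ltnW.
rewrite /= (big_ltn yn).
have i0 := it_ge0 k tau y m; have i1 := it_ge0 k tau (n - y)%N m.
have s0 : (0 <= (split_rate gamma n y)%:E)%E by rewrite lee_fin split_rate_ge0.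
apply: le_trans (_ : _ <= (split_rate gamma n y)%:E * (it k tau y m + it k tau (n - y) m)) _.
  by apply: lee_pmul => //; apply: leeDl.
rewrite addrCA; apply: leeDl.
apply: adde_ge0; apply: sume_ge0 => j _; (apply: mule_ge0; first by rewrite lee_fin split_rate_ge0);
 exact: adde_ge0 (it_ge0 _ _ _ _) (it_ge0 _ _ _ _).
Qed.
Lemma intA (a t c : R) : (0 < a)%R -> (a <= t)%R -> (0 <= c)%R ->
  \int[@lebesgue_measure R]_(s in `[0%R, t]%classic) (c * \1_(`[0%R, a]%classic) s)%:E = (c * a)%:E.
Proof.
move=> a0 hat c0.
have H := @integralZl_indic _ _ _ (@lebesgue_measure R) `[0%R, t]%classic (measurable_itv _) (fun _ => `[0%R, a]%classic) c.
rewrite /= in H; rewrite H //; last by move=> cl; move: (le_lt_trans c0 cl); rewrite ltxx.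
rewrite integral_indic // setIidl; last first.
  by move=> x /=; rewrite !in_itv /= => /andP[-> xa]; exact: le_trans xa hat.
have L := @lebesgue_measure_itv R `[0%R, a]. rewrite /= lte_fin a0 oppr0 adde0 in L. rewrite -[X in _ * X]/(lebesgue_measure `[0%R,a]%classic) L. by [].
Qed.

Definition Q k n m := forall a b : R, (0 < a)%R -> (a <= b)%R ->
  exists2 d : R, (0 < d)%R & forall t, (a <= t <= b)%R -> d%:E <= it k t n m.

Lemma Q_base m : Q 1 m m.
Proof.
move=> a b a0 ab.
exists (expR (- total_rate beta theta gamma m * b)); first exact: expR_gt0.
move=> t /andP[hat tb].
rewrite itE eqxx mulr1; apply: le_trans (leeDl _ _); last first.
  by apply: integral_ge0 => s _; apply: mule_ge0; rewrite ?lee_fin ?expR_ge0 //;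
    apply: adde_ge0; [apply: mule_ge0; rewrite ?it_ge0 // lee_fin; apply: mulr_ge0 => //; exact: ltW|
     apply: sume_ge0 => j _; apply: mule_ge0; rewrite ?lee_fin ?split_rate_ge0 //; exact: adde_ge0 (it_ge0 _ _ _ _) (it_ge0 _ _ _ _)].
rewrite lee_fin ler_expR !mulNr lerN2; apply: ler_wpM2l; first exact: total_rate_ge0.
exact: tb.
Qed.

Lemma Q_step k n n' m w : (0 < w)%R ->
  (forall tau, w%:E * it k tau n' m <= brk k tau n m) -> Q k n' m -> Q k.+1 n m.
Proof.
move=> w0 hw hQ a b a0 ab.
have a20 : (0 < a / 2)%R by rewrite divr_gt0.
have a2a : (a / 2 <= a)%R by rewrite ler_pdivrMr // ler_peMr // ?ler1n // ltW.
have [d d0 hd] := hQ (a / 2)%R b a20 (le_trans a2a ab).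
set r := total_rate beta theta gamma n.
set c := (expR (- r * b) * w * d)%R.
have c0 : (0 < c)%R by rewrite /c !mulr_gt0 ?expR_gt0.
exists (c * (a / 2))%R; first by rewrite mulr_gt0.
move=> t /andP[hat tb].
rewrite itE; apply: le_trans (leeDr _ _); last by rewrite lee_fin; apply: mulr_ge0; rewrite ?expR_ge0.
rewrite -(@intA (a / 2)%R t c a20 (le_trans a2a hat) (ltW c0)).
apply: int_mono => s.
  by move=> _; rewrite lee_fin indicE; apply: mulr_ge0; [exact: ltW c0 | exact: ler0n].
rewrite /= in_itv /= => /andP[s0 st].
rewrite indicE; case: (boolP (s \in _)) => hs; last first.
  rewrite mulr0 ; apply: mule_ge0; rewrite ?lee_fin ?expR_ge0 //.
  apply: adde_ge0; [apply: mule_ge0; rewrite ?it_ge0 // lee_fin; apply: mulr_ge0 => //; exact: ltW|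
     apply: sume_ge0 => j _; apply: mule_ge0; rewrite ?lee_fin ?split_rate_ge0 //; exact: adde_ge0 (it_ge0 _ _ _ _) (it_ge0 _ _ _ _)].
move: hs; rewrite inE /= in_itv /= => /andP[_ sa].
rewrite mulr1 /c !EFinM -muleA.
apply: lee_pmul; rewrite ?lee_fin ?expR_ge0 //.
- by apply: mulr_ge0; apply: ltW.
- rewrite ler_expR !mulNr lerN2; apply: ler_wpM2l; first exact: total_rate_ge0.
  exact: le_trans st tb.
- apply: le_trans (hw (t - s)%R); apply: lee_pmul; rewrite ?lee_fin ?(ltW w0) ?(ltW d0) //.
  apply: hd; apply/andP; split.
    lra.
  lra.
Qed.

Lemma Q_up d : forall x y, (0 < x)%N -> (x + d = y)%N -> exists k, Q k x y.
Proof.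
elim: d => [|d IH] x y x0 e.
  by exists 1%N; rewrite -e addn0; exact: Q_base.
have e' : (x.+1 + d)%N = y by rewrite -e addSnnS.
have [k hk] := IH x.+1 y (ltn0Sn _) e'.
exists k.+1; apply: (@Q_step k x x.+1 y (beta * x%:R)%R _ _ hk).
  by rewrite mulr_gt0 // ltr0n.
by move=> tau; exact: brk_grow.
Qed.

Lemma Q_reach x y : (0 < x)%N -> (0 < y)%N -> exists k, Q k x y.
Proof.
move=> x0 y0; have [xy|yx] := leqP x y.
  by apply: (@Q_up (y - x)%N x y x0); rewrite subnKC.
exists 2%N; apply: (@Q_step 1%N x y y (split_rate gamma x y)).
- exact: split_rate_gt0.
- by move=> tau; apply: brk_split; rewrite y0 yx.
- exact: Q_base.
Qed.

Lemma M_pos x y t : (0 < x)%N -> (0 < y)%N -> (0 < t)%R ->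
  0 < moment_M beta theta gamma t x y.
Proof.
move=> x0 y0 t0; have [k hk] := @Q_reach x y x0 y0.
have [d d0 hd] := hk t t t0 (lexx t).
apply: (@lt_le_trans _ _ d%:E); first by rewrite lte_fin.
apply: le_trans (hd t _) _; first by rewrite lexx.
by apply: ereal_sup_ubound; exists k.
Qed.
End M.

Section Fin.
Context {R : realType}.
Lemma fin_bound (g : nat -> R) N : exists M, 0 <= M /\ forall n, (n <= N)%N -> g n <= M.
Proof.
elim: N => [|N [M [M0 HM]]].
  exists (Num.max 0 (g 0%N)); split; first by rewrite le_max lexx.
  by move=> n; rewrite leqn0 => /eqP ->; rewrite le_max lexx orbT.
exists (Num.max M (g N.+1)); split; first by rewrite le_max M0.
move=> n; rewrite leq_eqVlt => /orP[/eqP ->|]; first by rewrite le_max lexx orbT.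
by rewrite ltnS => /HM h; rewrite le_max h.
Qed.

Lemma ev_bound (g : nat -> R) N : (forall n, (N <= n)%N -> (0 < n)%N -> g n <= 0) ->
  exists M, 0 <= M /\ forall n, (0 < n)%N -> g n <= M.
Proof.
move=> H; have [M [M0 HM]] := fin_bound g N.
exists M; split => // n n0; have [nN|Nn] := leqP n N; first exact: HM.
by apply: le_trans (H n (ltnW Nn) n0) M0.
Qed.

Lemma tele m n : (0 < m)%N -> (m <= n)%N ->
  \sum_(m <= j < n) (1 / (j%:R * j.+1%:R) : R) = 1 / m%:R - 1 / n%:R.
Proof.
move=> m0; elim: n => [|n IH]; first by rewrite leqn0 => /eqP m00; rewrite m00 in m0.
rewrite leq_eqVlt => /orP[/eqP <-|]; first by rewrite big_geq // subrr.
rewrite ltnS => mn; rewrite big_nat_recr //= IH //.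
have n0 : (n%:R : R) != 0 by rewrite pnatr_eq0 -lt0n (leq_trans m0 mn).
have m0' : (m%:R : R) != 0 by rewrite pnatr_eq0 -lt0n.
rewrite -natr1.
have n1 : (n%:R + 1 : R) != 0 by rewrite natr1 pnatr_eq0.
by field; rewrite n0 m0' n1.
Qed.
End Fin.

Section GenL.
Context {R : realType} (beta theta gamma : R).
Hypotheses (hb : 0 < beta) (ht : 0 < theta) (hg : 0 < gamma).
Variables (f : nat -> R) (J : nat) (B : R).
Hypothesis hf : forall n, (J < n)%N -> f n = B.
Arguments hf {n}.

Definition Sf := \sum_(1 <= j < J.+1) f j / (j%:R * j.+1%:R).

Lemma L_ident n : (2 * J < n)%N -> gen_L beta theta gamma f n =
  n%:R * (gamma * Sf + gamma * B / J.+1%:R - theta * B) - gamma * B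
  + \sum_(1 <= k < J.+1) split_rate gamma n (n - k) * (f k - B).
Proof.
move=> hn.
have nJ : (J < n)%N by apply: leq_ltn_trans hn; rewrite leq_pmull.
have n0 : (0 < n)%N by apply: leq_ltn_trans hn.
have nJ1 : (J < n.+1)%N by lia.
rewrite /gen_L (hf nJ) (hf nJ1) subrr mulr0 add0r.
have -> : \sum_(1 <= j < n) split_rate gamma n j * (f j + f (n - j)%N - B) =
   \sum_(1 <= j < n) split_rate gamma n j * f j +
   \sum_(1 <= j < n) split_rate gamma n j * (f (n - j)%N - B).
  by rewrite -big_split; apply: eq_bigr => j _ /=; rewrite -mulrDr addrA.
have J1 : (1 <= J.+1)%N by [].
have Jn : (J.+1 <= n)%N by [].
rewrite (big_cat_nat J1 Jn) /=.
have -> : \sum_(1 <= i < J.+1) split_rate gamma n i * f i = gamma * n%:R * Sf.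
  rewrite /Sf mulr_sumr; apply: eq_bigr => j _; rewrite /split_rate; ring.
have -> : \sum_(J.+1 <= i < n) split_rate gamma n i * f i =
    gamma * n%:R * B * (1 / J.+1%:R - 1 / n%:R).
  rewrite -tele //; rewrite mulr_sumr; apply: eq_big_nat => j /andP[hj _].
  by rewrite hf // /split_rate; ring.
have -> : \sum_(1 <= j < n) split_rate gamma n j * (f (n - j)%N - B) =
    \sum_(1 <= k < J.+1) split_rate gamma n (n - k) * (f k - B).
  rewrite big_nat_rev /=.
  rewrite (eq_big_nat _ _ (F2 := fun k => split_rate gamma n (n - k) * (f k - B))); last first.
    move=> i /andP[i1 i2]; rewrite add1n subSS subKn //; exact: ltnW.
  rewrite (big_cat_nat J1 Jn) /=.
  have -> : \sum_(J.+1 <= i < n) split_rate gamma n (n - i) * (f i - B) = 0.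
    rewrite big_nat_cond big1 // => i /andP[/andP[hi _] _].
    by rewrite hf // subrr mulr0.
  by rewrite addr0.
have nz : (n%:R : R) != 0 by rewrite pnatr_eq0 -lt0n.
have Jz : (J%:R + 1 : R) != 0 by rewrite natr1 pnatr_eq0.
field. by rewrite nz addrC Jz.
Qed.

Lemma srk_le n k : (0 < k)%N -> (k <= J)%N -> (2 * J < n)%N -> split_rate gamma n (n - k) <= gamma.
Proof.
move=> k0 kJ hn.
have nk : (0 < n - k)%N by lia.
rewrite /split_rate ler_pdivrMr; last by rewrite mulr_gt0 ?ltr0n.
apply: ler_wpM2l; first exact: ltW. rewrite -natrM ler_nat.
nia.
Qed.

Hypothesis f01 : forall k, (0 < k)%N -> (k <= J)%N -> 0 <= f k <= 1.
Arguments f01 {k}.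
Hypothesis B01 : 0 <= B <= 1.

Lemma E_up n : (2 * J < n)%N ->
  \sum_(1 <= k < J.+1) split_rate gamma n (n - k) * (f k - B) <= gamma *+ J.
Proof.
move=> hn.
have -> : gamma *+ J = \sum_(1 <= k < J.+1) gamma by rewrite sumr_const_nat subn1.
apply: ler_sum_nat => k /andP[k1 kJ].
have [/andP[fk0 fk1]] := f01 k1 kJ; case/andP: B01 => B0 B1.
apply: le_trans (@srk_le n k k1 kJ hn).
rewrite -[X in _ <= X]mulr1; apply: ler_wpM2l; last by lra.
by rewrite /split_rate; apply: divr_ge0; apply: mulr_ge0 => //; exact: ltW.
Qed.

Lemma E_lo n : (2 * J < n)%N ->
  - (gamma *+ J) <= \sum_(1 <= k < J.+1) split_rate gamma n (n - k) * (f k - B).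
Proof.
move=> hn.
have -> : gamma *+ J = \sum_(1 <= k < J.+1) gamma by rewrite sumr_const_nat subn1.
rewrite -sumrN; apply: ler_sum_nat => k /andP[k1 kJ].
have [/andP[fk0 fk1]] := f01 k1 kJ; case/andP: B01 => B0 B1.
have s0 : 0 <= split_rate gamma n (n - k).
  by rewrite /split_rate; apply: divr_ge0; apply: mulr_ge0 => //; exact: ltW.
have := @srk_le n k k1 kJ hn.
nra.
Qed.
End GenL.

Section Psi.
Context {R : realType} (beta theta gamma : R).
Hypotheses (hb : 0 < beta) (ht : 0 < theta) (hg : 0 < gamma).

Definition JJ := (Num.Def.archi_bound (gamma / theta)).+2.
Definition vv (j : nat) : R := if j == 2%N then 1 / 2 else 1.
Definition Sv := \sum_(1 <= j < JJ.+1) vv j / (j%:R * j.+1%:R).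
Definition den := theta - gamma / JJ.+1%:R.
Definition KK := gamma * Sv / den.
Definition xx := 1 / (1 + KK).
Definition BB := xx * KK.
Definition psi (n : nat) : R := if (n <= JJ)%N then xx * vv n else BB.

Lemma JJ2 : (2 <= JJ)%N. Proof. by []. Qed.

Lemma den2 : gamma < theta * JJ.+1%:R.
Proof.
have h := @archi_boundP R (gamma / theta) (divr_ge0 (ltW hg) (ltW ht)).
have h2 : (Num.Def.archi_bound (gamma / theta))%:R <= (JJ.+1%:R : R) by rewrite ler_nat /JJ; lia.
have h3 : gamma < theta * JJ.+1%:R.
  by move: (lt_le_trans h h2); rewrite ltr_pdivrMr // mulrC.
by [].
Qed.

Lemma den_gt0 : 0 < den.
Proof.
have h3 := den2.
rewrite /den subr_gt0 ltr_pdivrMr ?ltr0n //.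
Qed.

Lemma vv01 j : 1 / 2 <= vv j <= 1.
Proof. rewrite /vv; case: ifP => _; apply/andP; split; lra. Qed.

Lemma Sv_gt0 : 0 < Sv.
Proof.
rewrite /Sv big_ltn // /=.
apply: ltr_pwDl.
  by rewrite /vv /=; apply: divr_gt0; [lra | rewrite mulr_gt0 ?ltr0n].
rewrite big_nat_cond; apply: sumr_ge0 => j /andP[/andP[j1 _] _].
apply: divr_ge0; first by case/andP: (vv01 j) => h _; lra.
by rewrite mulr_ge0.
Qed.

Lemma KK_gt0 : 0 < KK.
Proof. by rewrite /KK divr_gt0 ?mulr_gt0 ?Sv_gt0 ?den_gt0. Qed.

Lemma xx_gt0 : 0 < xx.
Proof. by rewrite /xx divr_gt0 // addr_gt0 // KK_gt0. Qed.

Lemma xx_le1 : xx <= 1.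
Proof. rewrite /xx ler_pdivrMr ?mul1r; have := KK_gt0; lra. Qed.

Lemma BB_gt0 : 0 < BB.
Proof. by rewrite /BB mulr_gt0 ?xx_gt0 ?KK_gt0. Qed.

Lemma BB_le1 : BB <= 1.
Proof.
rewrite /BB /xx mul1r mulrC -/(KK / (1 + KK)) ler_pdivrMr ?mul1r; have := KK_gt0; lra.
Qed.

Lemma psi_pos n : 0 < psi n.
Proof.
rewrite /psi; case: ifP => _; last exact: BB_gt0.
apply: mulr_gt0; first exact: xx_gt0.
by case/andP: (vv01 n) => h _; lra.
Qed.

Lemma psi_le1 n : psi n <= 1.
Proof.
rewrite /psi; case: ifP => _; last exact: BB_le1.
case/andP: (vv01 n) => _ h; have := xx_le1; have := xx_gt0; nra.
Qed.

Definition cc := Num.min (xx / 2) BB.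

Lemma cc_gt0 : 0 < cc.
Proof. by rewrite /cc lt_min BB_gt0 divr_gt0 ?xx_gt0. Qed.

Lemma cc_le n : cc <= psi n.
Proof.
rewrite /psi /cc; case: ifP => _; last by rewrite ge_min lexx orbT.
rewrite ge_min; apply/orP; left.
case/andP: (vv01 n) => h _; have := xx_gt0; nra.
Qed.

Lemma psi21 : psi 2 < psi 1.
Proof.
rewrite /psi JJ2 /= /vv /=; have := xx_gt0; lra.
Qed.

Lemma psi_eq n : (JJ < n)%N -> psi n = BB.
Proof. by rewrite /psi ltnNge => /negbTE ->. Qed.

Lemma balance : gamma * Sf psi JJ + gamma * BB / JJ.+1%:R - theta * BB = 0.
Proof.
have -> : Sf psi JJ = xx * Sv.
  rewrite /Sf /Sv mulr_sumr; apply: eq_big_nat => j /andP[_ hj].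
  by rewrite /psi -ltnS hj mulrA.
have := den_gt0; rewrite /BB /KK /den => d0.
have dz : theta - gamma / JJ.+1%:R != 0 by rewrite gt_eqF.
have Jz : (JJ.+1%:R : R) != 0 by rewrite pnatr_eq0.
have J1 : (1 + JJ%:R : R) = JJ.+1%:R by rewrite addrC natr1.
field. rewrite J1 Jz /= subr_eq0 gt_eqF //; exact: den2.
Qed.

Lemma Lpsi_bound : exists M, 0 <= M /\ forall n, (0 < n)%N ->
  - M <= gen_L beta theta gamma psi n <= M.
Proof.
have [M1 [M10 HM1]] := fin_bound (gen_L beta theta gamma psi) (2 * JJ).
have [M2 [M20 HM2]] := fin_bound (fun n => - gen_L beta theta gamma psi n) (2 * JJ).
set M3 := gamma *+ JJ.+1.
have M30 : 0 <= M3 by rewrite /M3 mulrn_wge0 // ltW.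
exists (Num.max M1 (Num.max M2 M3)); split; first by rewrite le_max M10.
move=> n n0; have [nJ|Jn] := leqP n (2 * JJ).
  have h1 := HM1 n nJ; have h2 := HM2 n nJ.
  apply/andP; split.
    rewrite lerNl; apply: le_trans h2 _; by rewrite le_max le_max lexx orbT.
  by apply: le_trans h1 _; rewrite le_max lexx.
have hf : forall m, (JJ < m)%N -> psi m = BB by move=> m; exact: psi_eq.
have f01 : forall k, (0 < k)%N -> (k <= JJ)%N -> 0 <= psi k <= 1.
  by move=> k _ _; rewrite psi_le1 ltW ?psi_pos.
have B01 : 0 <= BB <= 1 by rewrite BB_le1 ltW ?BB_gt0.
rewrite (@L_ident _ beta theta gamma hb ht hg _ _ _ hf _ Jn) balance mulr0 add0r.
have e1 := @E_up _ beta theta gamma hb ht hg _ _ _ f01 B01 _ Jn.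
have e2 := @E_lo _ beta theta gamma hb ht hg _ _ _ f01 B01 _ Jn.
have hB := BB_gt0; have hB1 := BB_le1.
have hM3 : M3 = gamma *+ JJ + gamma by rewrite /M3 mulrSr.
have m3 : M3 <= Num.max M1 (Num.max M2 M3) by rewrite le_max le_max lexx !orbT.
have gB : gamma * BB <= gamma by rewrite -[X in _ <= X]mulr1; apply: ler_wpM2l => //; exact: ltW.
have gB0 : 0 <= gamma * BB by rewrite mulr_ge0 // ltW.
apply/andP; split; lra.
Qed.
End Psi.

Section VS.
Context {R : realType} (beta theta gamma : R).
Hypotheses (hb : 0 < beta) (ht : 0 < theta) (hg : 0 < gamma).

Lemma sr_ge0 n j : 0 <= split_rate gamma n j.
Proof. by rewrite /split_rate; apply: divr_ge0; apply: mulr_ge0 => //; exact: ltW. Qed.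

Lemma S_mono (V : nat -> R) : (forall n, (0 < n)%N -> V n <= V n.+1) ->
  forall k n, (0 < k)%N -> (k <= n)%N -> V k <= V n.
Proof.
move=> h k n k0 kn; rewrite -(subnKC kn).
elim: (n - k)%N => [|d IH]; first by rewrite addn0.
by apply: le_trans IH _; rewrite addnS; apply: h; rewrite addn_gt0 k0.
Qed.

Lemma S_ev V a : in_S V -> exists N, forall n, (N <= n)%N -> (0 < n)%N ->
  gen_L beta theta gamma V n - a * V n <= 0.
Proof.
move=> [h1 [h2 [h3 [h4 h5]]]].
have u0 : forall j, (1 <= j)%N -> true -> (0 <= (V j / (j%:R * j.+1%:R))%:E)%E.
  move=> j j1 _; rewrite lee_fin; apply: divr_ge0; last by rewrite mulr_ge0.
  by apply: le_trans (h1 j j1).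
set ser := (\sum_(1 <= j <oo) (V j / (j%:R * j.+1%:R))%:E)%E.
have ser0 : (0 <= ser)%E by apply: nneseries_ge0.
have serf : ser \is a fin_num by rewrite ge0_fin_numE.
set C := fine ser.
have C0 : 0 <= C by rewrite /C fine_ge0.
have partial : forall n, \sum_(1 <= j < n) V j / (j%:R * j.+1%:R) <= C.
  move=> n; rewrite -lee_fin -sumEFin /C fineK //.
  exact: nneseries_lim_ge.
have [N1 _ HN1] := cvgry_ge h3 (2 * gamma * C / theta).
set N2 := Num.Def.archi_bound (2 * `|beta - a| / theta).
have hN2 := @archi_boundP R (2 * `|beta - a| / theta) (divr_ge0 (mulr_ge0 (ler0n _ 2) (normr_ge0 _)) (ltW ht)).
exists (maxn N1 N2) => n; rewrite geq_max => /andP[hn1 hn2] n0.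
have Vn1 := h1 n n0.
have VN := HN1 n hn1.
have t1 : beta * n%:R * (V n.+1 - V n) <= beta * V n.
  have := h4 n n0; rewrite ler_pdivrMr ?ltr0n // mulrAC ler_pdivlMr ?ltr0n // => h.
  rewrite -mulrA; apply: ler_wpM2l; first exact: ltW.
  move: h; rewrite -natr1; lra.
have t2 : \sum_(1 <= j < n) split_rate gamma n j * (V j + V (n - j)%N - V n) <=
          \sum_(1 <= j < n) split_rate gamma n j * V j.
  apply: ler_sum_nat => j /andP[j1 jn]; apply: ler_wpM2l; first exact: sr_ge0.
  have : V (n - j)%N <= V n by apply: S_mono => //; [rewrite subn_gt0 | exact: leq_subr].
  lra.
have t3 : \sum_(1 <= j < n) split_rate gamma n j * V j =
          gamma * n%:R * \sum_(1 <= j < n) V j / (j%:R * j.+1%:R).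
  by rewrite mulr_sumr; apply: eq_bigr => j _; rewrite /split_rate; ring.
have t4 : gamma * n%:R * \sum_(1 <= j < n) V j / (j%:R * j.+1%:R) <= gamma * n%:R * C.
  apply: ler_wpM2l; last exact: partial.
  by apply: mulr_ge0; [exact: ltW | exact: ler0n].
have hn : (N2%:R : R) <= n%:R by rewrite ler_nat.
have e1 : 2 * `|beta - a| < theta * n%:R.
  by move: (lt_le_trans hN2 hn); rewrite ltr_pdivrMr // => h; lra.
have e2 : 2 * gamma * C <= theta * V n.
  by move: VN; rewrite ler_pdivrMr // => h; lra.
have e3 : beta - a <= `|beta - a| := ler_norm _.
have f1 : 0 <= (theta * n%:R - 2 * (beta - a)) * V n.
  by apply: mulr_ge0; lra.
have f2 : 0 <= n%:R * (theta * V n - 2 * gamma * C).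
  by apply: mulr_ge0; [exact: ler0n | lra].
rewrite /gen_L.
lra.
Qed.
End VS.

Section VP.
Context {R : realType} (beta theta gamma : R).
Hypotheses (hb : 0 < beta) (ht : 0 < theta) (hg : 0 < gamma).

Lemma expR_le2 (y : R) : 0 <= y -> y <= 1 / 2 -> expR y <= 1 + 2 * y.
Proof.
move=> y0 y2.
have h := expR_ge1Dx (- y); rewrite expRN in h.
have e0 := expR_gt0 y.
have h' := ler_wpM2r (ltW e0) h; rewrite mulVf ?gt_eqF // in h'.
nra.
Qed.

Lemma superadd (p s t : R) : 1 <= p -> 0 < s -> 0 < t -> s `^ p + t `^ p <= (s + t) `^ p.
Proof.
move=> p1 s0 t0.
have st0 : 0 < s + t by rewrite addr_gt0.
have es : s = (s / (s + t)) * (s + t) by rewrite divfK // gt_eqF.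
have et : t = (t / (s + t)) * (s + t) by rewrite divfK // gt_eqF.
have hs : 0 < s / (s + t) <= 1.
  by rewrite divr_gt0 //= ler_pdivrMr // mul1r lerDl ltW.
have ht' : 0 < t / (s + t) <= 1.
  by rewrite divr_gt0 //= ler_pdivrMr // mul1r lerDr ltW.
set a := s / (s + t); set b := t / (s + t).
have a0 : 0 <= a by rewrite /a divr_ge0 // ltW.
have b0 : 0 <= b by rewrite /b divr_ge0 // ltW.
rewrite [in X in X + _ <= _]es [in X in _ + X <= _]et.
rewrite (powRM p a0 (ltW st0)) (powRM p b0 (ltW st0)).
have P0 := powR_ge0 (s + t) p.
have hab : a + b = 1 by rewrite /a /b -mulrDl divff // gt_eqF.
rewrite -[X in _ <= X]mul1r -hab mulrDl.
by apply: lerD; apply: ler_wpM2r => //; apply: ge1r_powR.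
Qed.

Lemma growth (p n : R) : 1 <= p -> 0 < n -> 2 * p <= n ->
  (n + 1) `^ p <= n `^ p * (1 + 2 * p / n).
Proof.
move=> p1 n0 hn.
have -> : n + 1 = n * (1 + 1 / n) by rewrite mulrDr mulr1 mul1r divff // gt_eqF.
have q0 : 0 <= 1 + 1 / n by rewrite addr_ge0 // divr_ge0 // ltW.
rewrite (powRM p (ltW n0) q0).
apply: ler_wpM2l; first exact: powR_ge0.
have h1 : 1 + 1 / n <= expR (1 / n) := expR_ge1Dx _.
have h2 : (1 + 1 / n) `^ p <= expR (1 / n) `^ p.
  apply: ge0_ler_powR; rewrite ?nnegrE ?expR_ge0 //.
  by apply: le_trans p1.
apply: le_trans h2 _; rewrite -expRM.
have -> : 1 / n * p = p / n by rewrite mulrC mul1r.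
have -> : 2 * p / n = 2 * (p / n) by rewrite mulrA.
apply: expR_le2; first by apply: divr_ge0; [apply: le_trans p1 | exact: ltW].
by rewrite ler_pdivrMr //; lra.
Qed.

Lemma P_ev (V : nat -> R) (p a : R) : 1 <= p -> (forall n, (0 < n)%N -> V n = powfun p n) ->
  exists N, forall n, (N <= n)%N -> (0 < n)%N -> gen_L beta theta gamma V n - a * V n <= 0.
Proof.
move=> p1 hV.
set N1 := Num.Def.archi_bound (2 * p).
have hN1 := @archi_boundP R (2 * p) (mulr_ge0 (ler0n _ 2) (le_trans ler01 p1)).
set N2 := Num.Def.archi_bound (`|2 * beta * p - a| / theta).
have hN2 := @archi_boundP R (`|2 * beta * p - a| / theta) (divr_ge0 (normr_ge0 _) (ltW ht)).
exists (maxn N1 N2) => n; rewrite geq_max => /andP[hn1 hn2] n0.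
have nr0 : (0 : R) < n%:R by rewrite ltr0n.
have hn1' : 2 * p <= n%:R by apply: ltW; apply: lt_le_trans hN1 _; rewrite ler_nat.
have hn2' : `|2 * beta * p - a| <= theta * n%:R.
  have := lt_le_trans hN2 (_ : _ <= (n%:R : R)); rewrite ?ler_nat // => /(_ hn2).
  by rewrite ltr_pdivrMr // => h; lra.
have e3 : 2 * beta * p - a <= `|2 * beta * p - a| := ler_norm _.
rewrite /gen_L.
have split0 : \sum_(1 <= j < n) split_rate gamma n j * (V j + V (n - j)%N - V n) <= 0.
  rewrite big_nat_cond; apply: sumr_le0 => j /andP[/andP[j1 jn] _].
  apply: mulr_ge0_le0; first by rewrite /split_rate; apply: divr_ge0; apply: mulr_ge0 => //; exact: ltW.
  rewrite !hV ?subn_gt0 // /powfun natrB; last exact: ltnW.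
  have hj : (0:R) < j%:R by rewrite ltr0n.
  have hnj : (0:R) < n%:R - j%:R by rewrite subr_gt0 ltr_nat.
  have := @superadd p _ _ p1 hj hnj; rewrite subrKC.
  lra.
rewrite !hV //.
rewrite /powfun.
set P := n%:R `^ p.
have P0 : 0 <= P := powR_ge0 _ _.
have g := @growth p _ p1 nr0 hn1'; rewrite -/P in g.
rewrite -natr1.
have t1 : beta * n%:R * ((n%:R + 1) `^ p - P) <= 2 * beta * p * P.
  apply: le_trans (_ : beta * n%:R * (P * (1 + 2 * p / n%:R) - P) <= _).
    by apply: ler_wpM2l; [rewrite mulr_ge0 // ltW | lra].
  rewrite le_eqVlt; apply/orP; left; apply/eqP; field; rewrite gt_eqF //.
have f1 : 0 <= (theta * n%:R - (2 * beta * p - a)) * P by apply: mulr_ge0 => //; lra.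
move: split0; rewrite !hV //.
lra.
Qed.
End VP.

Lemma V_props (R : realType) (V : nat -> R) :
  (in_S V \/ exists p : R, 1 <= p /\ forall n, (0 < n)%N -> V n = powfun p n) ->
  0 <= V 1%N /\ forall r : R, exists N, forall n, (0 < n)%N -> V n <= r -> (n < N)%N.
Proof.
case=> [[h1 [h2 [h3 _]]]|[p [p1 hV]]].
  split; first by apply: le_trans (h1 1%N isT).
  move=> r; have [N _ HN] := cvgry_gt h3 r.
  exists N => n n0 hr; rewrite ltnNge; apply/negP => /HN /=; rewrite ltNge hr //.
split; first by rewrite hV // /powfun powR1.
move=> r; exists (Num.Def.archi_bound `|r|) => n n0 hr.
have h := @archi_boundP R `|r| (normr_ge0 _).
have n1 : (1 : R) <= n%:R by rewrite ler1n.
have : (n%:R : R) <= n%:R `^ p.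
  by rewrite -[X in X <= _]powRr1 ?ler0n //; apply: ler_powR.
rewrite -/(powfun p n) -hV // => hn.
have : (n%:R : R) < (Num.Def.archi_bound `|r|)%:R.
  by apply: le_lt_trans h; apply: le_trans hn _; apply: le_trans hr _; exact: ler_norm.
by rewrite ltr_nat.
Qed.

Theorem lemma4p2 (R : realType) (beta theta gamma : R)
  (hbeta : 0 < beta) (htheta : 0 < theta) (hgamma : 0 < gamma) :
  exists psi : nat -> R,
    (forall n, (0 < n)%N -> 0 < psi n) /\
    (exists c : R, 0 < c /\ forall n, (0 < n)%N -> c <= psi n) /\
    (exists m n, (0 < m)%N /\ (0 < n)%N /\ psi m < psi n) /\
    (forall n, (0 < n)%N -> psi n <= 1) /\
    forall V : nat -> R,
      (in_S V \/ exists p : R, 1 <= p /\ forall n, (0 < n)%N -> V n = powfun p n) ->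
      (exists a b xi zeta : R, a < b /\ 0 < zeta /\
         forall n, (0 < n)%N ->
           gen_L beta theta gamma V n <= a * V n + zeta * psi n /\
           b * psi n <= gen_L beta theta gamma psi n /\
           gen_L beta theta gamma psi n <= xi * psi n) /\
      (exists R0 : R, forall r : R, R0 <= r ->
         let K := [set x : nat | (0 < x)%N /\ V x / r <= psi x] in
         K !=set0 /\ finite_set K /\
         forall x y t0, K x -> K y -> 0 < t0 ->
           (0 < moment_M beta theta gamma t0 x y)%E).
Proof.
have ppos := psi_pos beta theta gamma hbeta htheta hgamma.
have ple1 := psi_le1 beta theta gamma hbeta htheta hgamma.
have c0 := cc_gt0 beta theta gamma hbeta htheta hgamma.
have cle := cc_le beta theta gamma hbeta htheta hgamma.
exists (psi theta gamma); split; first by move=> n _; exact: ppos.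
split; first by exists (cc theta gamma); split => // n _; exact: cle.
split; first by exists 2%N, 1%N; split => //; split => //; exact: psi21 beta theta gamma hbeta htheta hgamma.
split; first by move=> n _; exact: ple1.
move=> V hV.
have [Mp [Mp0 HMp]] := Lpsi_bound beta theta gamma hbeta htheta hgamma.
set b := - (Mp / (cc theta gamma)).
set a := b - 1.
have [N HN] : exists N, forall n, (N <= n)%N -> (0 < n)%N ->
    gen_L beta theta gamma V n - a * V n <= 0.
  case: hV => [hS|[p [p1 hp]]].
    exact: (@S_ev R beta theta gamma hbeta htheta hgamma V a hS).
  exact: (@P_ev R beta theta gamma hbeta htheta hgamma V p a p1 hp).
have [MV [MV0 HMV]] := @ev_bound R _ N HN.
have [V10 Vfin] := @V_props R V hV.
split.
  exists a, b, (Mp / (cc theta gamma)), ((MV + 1) / (cc theta gamma)); split; first by rewrite /a; lra.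
  split; first by rewrite divr_gt0 //; lra.
  move=> n n0.
  have pc := cle n; have p0 := ppos n.
  have q1 : 1 <= (psi theta gamma) n / (cc theta gamma) by rewrite ler_pdivlMr // mul1r.
  have /andP[l u] := HMp n n0.
  have hv := HMV n n0.
  have E1 : (MV + 1) / (cc theta gamma) * (psi theta gamma) n = (MV + 1) * ((psi theta gamma) n / (cc theta gamma)) by rewrite mulrAC mulrA.
  have E2 : Mp / (cc theta gamma) * (psi theta gamma) n = Mp * ((psi theta gamma) n / (cc theta gamma)) by rewrite mulrAC mulrA.
  have F1 : MV + 1 <= (MV + 1) * ((psi theta gamma) n / (cc theta gamma)) by rewrite ler_peMr //; lra.
  have F2 : Mp <= Mp * ((psi theta gamma) n / (cc theta gamma)) by rewrite ler_peMr.
  split; first by rewrite E1; lra.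
  split; first by rewrite /b mulNr E2; lra.
  by rewrite E2; lra.
exists (1 + V 1%N / (psi theta gamma) 1%N) => r hr K.
have p1 := ppos 1%N.
have q0 : 0 <= V 1%N / (psi theta gamma) 1%N by rewrite divr_ge0 // ltW.
have r0 : 0 < r by lra.
split.
  exists 1%N; split => //.
  rewrite ler_pdivrMr //.
  have h : V 1%N / (psi theta gamma) 1%N * (psi theta gamma) 1%N <= r * (psi theta gamma) 1%N.
    by apply: ler_wpM2r; [exact: ltW | lra].
  by rewrite (divfK (lt0r_neq0 p1)) in h; rewrite mulrC.
split.
  have [Nf HNf] := Vfin r.
  apply: (sub_finite_set _ (finite_II Nf)) => x [x0 hx] /=.
  apply: HNf => //.
  have := le_trans hx (ple1 x).
  by rewrite ler_pdivrMr // mul1r.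
move=> x y t0 [x0 _] [y0 _] t00.
exact: M_pos.
Qed.
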